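(* Let $n\ge 4$ and $k\ge 3$ be integers. Let $C_n=\{0,1,\dots,n-1\}$ be the $n$-element chain with the usual order, and let $C_2=\{0,1\}$. Let $K=C_n\times\dots\times C_n\times C_2$ be the direct product of $k$ copies of $C_n$ followed by one copy of $C_2$. Define $$e=(0,\dots,0,1,0),\qquad f=(n-2,\dots,n-2,n-1,0)\in K,$$ where the entry $1$ of $e$ and the entry $n-1$ of $f$ are in coordinate $k$. Let $L(n,k)=K\setminus[e,f]$ with the order inherited from $K$. Then $L(n,k)$ is an upper semimodular lattice with $2n^k-(n-1)^k$ elements and breadth $k$, and $L(n,k)$ fails to satisfy the $c_1$-median property.
   Context: $[e,f]=\{x\in K: e\le x\le f\}$, with the componentwise order on $K$. A lattice is upper semimodular if for all $x,y$, $x\wedge y\prec x$ implies $y\prec x\vee y$, where $\prec$ is the covering relation. The breadth of a lattice $L$ is the least positive integer $n$ such that every join of $m\ge n$ elements equals the join of some $n$ of those elements. For a lattice $L$ of finite length, $d(x,y)$ is the length of a shortest path between $x$ and $y$ in the undirected covering graph of $L$. For $\xi=(x_1,\dots,x_k)\in L^k$, an element $y\in L$ is a median of $\xi$ if $\sum_{i} d(y,x_i)$ is minimum over $L$. The lattice $L$ satisfies the $c_1$-median property if every median $y$ of every profile $\xi$ satisfies $y\le x_1\vee\dots\vee x_k$. *)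

(* Defs.v *)
From mathcomp Require Import all_boot.
Set Implicit Arguments. Unset Strict Implicit. Unset Printing Implicit Defensive.

Section Generic.
Variables (T : finType) (le : rel T).

Definition partial_order :=
  [/\ forall x, le x x,
      forall x y, le x y -> le y x -> x = y &
      forall x y z, le x y -> le y z -> le x z].

Definition is_lub (x y j : T) : bool :=
  [&& le x j, le y j & [forall z, le x z ==> le y z ==> le j z]].
Definition is_glb (x y m : T) : bool :=
  [&& le m x, le m y & [forall z, le z x ==> le z y ==> le z m]].

Definition is_lub_set (S : {set T}) (j : T) : bool :=
  [forall y in S, le y j] && [forall z, [forall y in S, le y z] ==> le j z].

Definition is_lattice :=
  partial_order /\ forall x y, (exists j, is_lub x y j) /\ (exists m, is_glb x y m).

Definition covers (x y : T) : bool :=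
  [&& le x y, x != y & [forall z, ~~ [&& le x z, le z y, z != x & z != y]]].

Definition upper_semimodular :=
  forall x y m j, is_glb x y m -> is_lub x y j -> covers m x -> covers y j.

Definition breadth_prop (b : nat) :=
  forall S : {set T}, b <= #|S| ->
    exists2 S' : {set T}, S' \subset S &
      #|S'| = b /\ forall j, is_lub_set S j = is_lub_set S' j.

Definition has_breadth (b : nat) :=
  [/\ 0 < b, breadth_prop b & forall b', 0 < b' < b -> ~ breadth_prop b'].

Definition adj : rel T := fun x y => covers x y || covers y x.

Definition walk_len (m : nat) (x y : T) : bool :=
  [exists p : m.-tuple T, path adj x p && (last x p == y)].

(* graph distance: least length of a walk (a shortest walk is a path, of
   length < #|T|); default #|T| if unreachable (never in a finite lattice) *)
Definition dist (x y : T) : nat :=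
  \big[minn/#|T|]_(m < #|T| | walk_len m x y) m.

Definition total_dist (xi : seq T) (y : T) : nat := \sum_(x <- xi) dist y x.

Definition is_median (xi : seq T) (y : T) :=
  forall z, total_dist xi y <= total_dist xi z.

Definition c1_median :=
  forall (xi : seq T) (y : T), xi != [::] -> is_median xi y ->
    forall j, is_lub_set [set x in xi] j -> le y j.

End Generic.

(* K = C_n^k x C_2 ; coordinates 0..k-1 are the C_n copies (coordinate k of
   the paper is index k-1), the bool is the C_2 coordinate (false = 0). *)
Definition K (n k : nat) := ({ffun 'I_k -> 'I_n} * bool)%type.

Definition leK (n k : nat) (x y : K n k) : bool :=
  [forall i, x.1 i <= y.1 i] && (x.2 ==> y.2).

Definition e_coord (n k : nat) (i : 'I_k) : nat := if val i == k.-1 then 1 else 0.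
Definition f_coord (n k : nat) (i : 'I_k) : nat := if val i == k.-1 then n - 1 else n - 2.

Definition in_ef (n k : nat) (x : K n k) : bool :=
  [forall i, (e_coord n i <= x.1 i) && (x.1 i <= f_coord n i)] && ~~ x.2.

Definition L (n k : nat) := {x : K n k | ~~ in_ef x}.

Definition leL (n k : nat) : rel (L n k) := fun x y => leK (val x) (val y).

(* Main.v *)
Require Import Defs.
From mathcomp Require Import all_boot zify.
Set Implicit Arguments. Unset Strict Implicit. Unset Printing Implicit Defensive.

Section Gen.
Variables (T : finType) (le : rel T).

Lemma walk0 x : walk_len le 0 x x.
Proof. by apply/existsP; exists [tuple]; rewrite /= eqxx. Qed.

Lemma walk1 x y : adj le x y -> walk_len le 1 x y.
Proof. by move=> a; apply/existsP; exists [tuple y]; rewrite /= a eqxx. Qed.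

Lemma walk_cat a b x y z :
  walk_len le a x y -> walk_len le b y z -> walk_len le (a + b) x z.
Proof.
move=> /existsP[p /andP[pp /eqP lp]] /existsP[q /andP[pq /eqP lq]].
apply/existsP; exists [tuple of p ++ q].
by rewrite /= cat_path pp last_cat lp pq lq eqxx.
Qed.

Lemma walk_lb (D : T -> T -> nat) :
  (forall x, D x x = 0) -> (forall x y z, D x z <= D x y + D y z) ->
  (forall x y, adj le x y -> D x y <= 1) ->
  forall m x y, walk_len le m x y -> D x y <= m.
Proof.
move=> D0 tri a1 m x y /existsP[p /andP[pp /eqP <-]].
suff : D x (last x p) <= size p by rewrite size_tuple.
elim: (tval p) x pp => [|a s IH] x /=; first by rewrite D0.
case/andP=> axa ps; apply: leq_trans (tri x a _) _.
by rewrite -add1n leq_add //; [exact: a1 | exact: IH].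
Qed.

Lemma bigmin_le (I : eqType) r (P : pred I) (F : I -> nat) c j :
  j \in r -> P j -> \big[minn/c]_(i <- r | P i) F i <= F j.
Proof.
elim: r => // a r IH; rewrite in_cons big_cons => /orP[/eqP<- Pj | jr Pj].
  by rewrite Pj geq_minl.
case: ifP => _; last exact: IH.
exact: leq_trans (geq_minr _ _) (IH jr Pj).
Qed.

Lemma dist_le m x y : walk_len le m x y -> m < #|T| -> dist le x y <= m.
Proof.
move=> w lt; rewrite /dist.
exact: (@bigmin_le _ _ _ (fun i : 'I_#|T| => val i) _ (Ordinal lt) (mem_index_enum _) w).
Qed.

Lemma dist_ge (D : nat) x y : (forall m, walk_len le m x y -> D <= m) ->
  D <= #|T| -> D <= dist le x y.
Proof.
move=> H HT; rewrite /dist; elim/big_ind: _ => //.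
  by move=> a b Ha Hb; rewrite leq_min Ha Hb.
by move=> i /H.
Qed.

Lemma lub_set_ex (po : partial_order le) (bin : forall x y, exists j, is_lub le x y j)
  (b : T) (hb : forall x, le b x) (S : {set T}) : exists j, is_lub_set le S j.
Proof.
case: po => refl _ trans.
have base : exists j, is_lub_set le set0 j.
  exists b; apply/andP; split; apply/forallP => z; first by rewrite in_set0.
  by rewrite hb implybT.
elim: {S}#|S| {-2}S (leqnn #|S|) => [|c IH] S hS.
  by have -> : S = set0 by apply/eqP; rewrite -cards_eq0 -leqn0.
case: (set_0Vmem S) => [-> // | [x xS]].
have : #|S :\ x| <= c by move: hS; rewrite (cardsD1 x S) xS.
case/IH => j0 /andP[/forallP ub0 /forallP lst0].
case: (bin x j0) => j /and3P[xj j0j /forallP lj].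
exists j; apply/andP; split.
  apply/forallP => y; apply/implyP => yS.
  case: (eqVneq y x) => [-> // | yx].
  by apply: trans j0j; apply: (implyP (ub0 y)); rewrite in_setD1 yx yS.
apply/forallP => z; apply/implyP => /forallP ubz.
have xz : le x z := implyP (ubz x) xS.
have j0z : le j0 z.
  apply: (implyP (lst0 z)); apply/forallP => y; apply/implyP.
  by rewrite in_setD1 => /andP[_ yS]; exact: implyP (ubz y) yS.
exact: implyP (implyP (lj z) xz) j0z.
Qed.

Lemma lub_unique (po : partial_order le) x y j1 j2 :
  is_lub le x y j1 -> is_lub le x y j2 -> j1 = j2.
Proof.
case: po => _ anti _ /and3P[a1 b1 /forallP c1] /and3P[a2 b2 /forallP c2].
by apply: anti; [apply: (implyP (implyP (c1 j2) a2)) | apply: (implyP (implyP (c2 j1) a1))].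
Qed.

Lemma total_dist3 (a b c y : T) :
  total_dist le [:: a; b; c] y = dist le y a + (dist le y b + dist le y c).
Proof. by rewrite /total_dist !big_cons big_nil addn0. Qed.

End Gen.

Lemma sum_eq_le (I : finType) (f g : I -> nat) : (forall i, f i <= g i) ->
  \sum_i g i <= \sum_i f i -> forall i, f i = g i.
Proof.
move=> H S i; apply/eqP; rewrite eqn_leq H /= leqNgt; apply/negP => lt.
have : \sum_i f i < \sum_i g i.
  rewrite (bigD1 i) //= [X in _ < X](bigD1 i) //=.
  rewrite -addSn leq_add //; apply: leq_sum => j _; exact: H.
by rewrite ltnNge S.
Qed.

Lemma ext_set (T : finType) (W S : {set T}) c : W \subset S -> #|W| <= c -> c <= #|S| ->
  exists2 S' : {set T}, W \subset S' & S' \subset S /\ #|S'| = c.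
Proof.
move=> WS Wc cS; have [d ed] : exists d, d = c - #|W| by eexists.
elim: d W ed WS Wc => [|d IH] W ed WS Wc.
  by exists W => //; split => //; apply/eqP; rewrite eqn_leq Wc /=; lia.
have : ~~ (S \subset W).
  by apply/negP => SW; have := subset_leq_card SW; lia.
case/subsetPn => x xS xW.
have xWS : x |: W \subset S.
  by apply/subsetP => y; rewrite in_setU1 => /orP[/eqP-> // | /(subsetP WS)].
have := IH (x |: W); rewrite cardsU1 xW /= => /(_ _ xWS) [].
- lia.
- lia.
move=> S' h1 h2; exists S' => //; exact: subset_trans (subsetUr _ _) h1.
Qed.

Section LN.
Variables n k : nat.
Hypothesis hn : 3 <= n.
Hypothesis hk : 2 <= k.
Local Notation KT := (K n.+1 k.+1).
Local Notation LT := (L n.+1 k.+1).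
Local Notation FF := {ffun 'I_k.+1 -> 'I_n.+1}.
Implicit Types x y z : KT.

Definition lst : 'I_k.+1 := ord_max.

Lemma lstE (i : 'I_k.+1) : (val i == k) = (i == lst).
Proof. by rewrite -val_eqE. Qed.

Lemma leKP x y : reflect ((forall i, x.1 i <= y.1 i) /\ (x.2 ==> y.2)) (leK x y).
Proof.
apply: (iffP andP) => [[/forallP H b]|[H b]]; split => //; exact/forallP.
Qed.

Lemma in_efE x : in_ef x =
  [&& ~~ x.2, 0 < x.1 lst & [forall i, (i != lst) ==> (x.1 i < n)]].
Proof.
rewrite /in_ef /e_coord /f_coord /=; apply/idP/idP.
  case/andP => /forallP H nb; rewrite nb /=.
  have := H lst; rewrite /= eqxx => /andP[-> _] /=.
  apply/forallP => i; apply/implyP => il; have := H i.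
  rewrite lstE (negbTE il) => /andP[_]; lia.
case/and3P => nb pos /forallP H; rewrite nb andbT; apply/forallP => i.
rewrite lstE; case: (eqVneq i lst) => [->|il] /=.
  by rewrite pos /=; have := ltn_ord (x.1 lst); lia.
by have := implyP (H i) il; lia.
Qed.

Lemma leK_trans x y z : leK x y -> leK y z -> leK x z.
Proof.
move=> /leKP[H1 b1] /leKP[H2 b2]; apply/leKP; split.
  by move=> i; exact: leq_trans (H1 i) (H2 i).
by move: b1 b2; case: x.2; case: y.2; case: z.2.
Qed.

Definition upd (f : FF) (i : 'I_k.+1) (v : 'I_n.+1) : FF :=
  [ffun j => if j == i then v else f j].

Definition sk (f : FF) : nat := \sum_i nat_of_ord (f i).
Definition rk x : nat := sk x.1 + x.2.

Lemma rk_mono x y : leK x y -> rk x <= rk y.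
Proof.
case/leKP => H b; rewrite /rk leq_add //; first by apply: leq_sum => i _; exact: H.
by move: b; case: x.2; case: y.2.
Qed.

Lemma rk_eq x y : leK x y -> rk y <= rk x -> x = y.
Proof.
case/leKP => H b r.
have s1 : sk x.1 <= sk y.1 by apply: leq_sum => i _; exact: H.
have s2 : sk y.1 <= sk x.1.
  by move: r b; rewrite /rk; case: x.2; case: y.2 => // *; lia.
have e1 := sum_eq_le H s2.
have e2 : x.2 = y.2 by move: r b; rewrite /rk; case: x.2; case: y.2 => // *; lia.
case: x y {H b r s1 s2} e1 e2 => [f a] [g c] /= e1 ->; congr (_, _).
by apply/ffunP => i; apply/val_inj; exact: e1.
Qed.

Lemma rk_lt x y : leK x y -> x != y -> rk x < rk y.
Proof.
move=> le ne; rewrite ltnNge; apply/negP => /(rk_eq le) e.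
by rewrite e eqxx in ne.
Qed.

Lemma sk_upd (f : FF) i v : sk (upd f i v) + f i = sk f + v.
Proof.
rewrite /sk (bigD1 i) // [X in _ = X + _](bigD1 i) //= ffunE eqxx.
rewrite (eq_bigr (fun j => nat_of_ord (f j))); last first.
  by move=> j /negbTE; rewrite ffunE => ->.
set X := \big[_/_]_(j | _) _.
lia.
Qed.

Lemma rk_upd (f : FF) i v b : rk (upd f i v, b) + f i = rk (f, b) + v.
Proof. rewrite /rk /=; have := sk_upd f i v; lia. Qed.

Definition maxo (a b : 'I_n.+1) := if a <= b then b else a.
Definition mino (a b : 'I_n.+1) := if a <= b then a else b.
Definition joinK x y : KT := ([ffun i => maxo (x.1 i) (y.1 i)], x.2 || y.2).
Definition meetK x y : KT := ([ffun i => mino (x.1 i) (y.1 i)], x.2 && y.2).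

Lemma rk_mod x y : rk (joinK x y) + rk (meetK x y) = rk x + rk y.
Proof.
rewrite /rk /joinK /meetK /=.
have E : sk [ffun i => maxo (x.1 i) (y.1 i)] +
         sk [ffun i => mino (x.1 i) (y.1 i)] = sk x.1 + sk y.1.
  rewrite /sk -!big_split /=; apply: eq_bigr => i _; rewrite !ffunE /maxo /mino.
  by case: ifP => _; lia.
move: E; case: x.2; case: y.2 => /= E; lia.
Qed.

Lemma joinK_in x y : ~~ in_ef x -> ~~ in_ef y -> ~~ in_ef (joinK x y).
Proof.
rewrite !in_efE /joinK /= !ffunE /maxo.
case/boolP: x.2 => //= xb; case/boolP: y.2 => //= yb.
move=> hx hy; apply/negP => /andP[pos /forallP H].
case: ifP pos => le pos.
  move: hy; rewrite pos /= => /negP; apply; apply/forallP => i; apply/implyP => il.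
  have := implyP (H i) il; rewrite ffunE /maxo; case: ifP => //; lia.
move: hx; rewrite pos /= => /negP; apply; apply/forallP => i; apply/implyP => il.
have := implyP (H i) il; rewrite ffunE /maxo; case: ifP => //; lia.
Qed.


Local Notation le := (@leL n.+1 k.+1).

Lemma po : partial_order le.
Proof.
split.
- by move=> x; apply/leKP; split => //; rewrite implybb.
- move=> x y /leKP[H1 b1] /leKP[H2 b2]; apply: val_inj.
  case: (val x) (val y) H1 H2 b1 b2 => [f a] [g c] /= H1 H2 b1 b2.
  congr (_, _); last by move: b1 b2; case: a; case: c.
  by apply/ffunP => i; apply/val_inj/eqP; rewrite eqn_leq H1 H2.
- move=> x y z /leKP[H1 b1] /leKP[H2 b2]; apply/leKP; split.
    by move=> i; exact: leq_trans (H1 i) (H2 i).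
  by move: b1 b2; case: (val x).2; case: (val y).2; case: (val z).2.
Qed.

Definition joinL (x y : LT) : LT :=
  exist _ (joinK (val x) (val y)) (joinK_in (valP x) (valP y)).

Lemma joinL_lub (x y : LT) : is_lub le x y (joinL x y).
Proof.
apply/and3P; split.
- apply/leKP; split => /=; last by case: (val x).2.
  by move=> i; rewrite ffunE /maxo; case: ifP => //; lia.
- apply/leKP; split => /=; last by case: (val y).2; rewrite ?orbT.
  by move=> i; rewrite ffunE /maxo; case: ifP => //; lia.
apply/forallP => z; apply/implyP => /leKP[H1 b1]; apply/implyP => /leKP[H2 b2].
apply/leKP; split => /=.
  by move=> i; rewrite ffunE /maxo; case: ifP => _; [exact: H2 | exact: H1].
by move: b1 b2; case: (val x).2; case: (val y).2.
Qed.

Definition meetM x y : KT :=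
  let M := meetK x y in if in_ef M then (upd M.1 lst ord0, M.2) else M.

Lemma meetM_in x y : ~~ in_ef (meetM x y).
Proof.
rewrite /meetM; case: ifP => [_|->//].
by rewrite in_efE /= ffunE eqxx /= andbF.
Qed.

Definition meetL (x y : LT) : LT :=
  exist _ (meetM (val x) (val y)) (meetM_in (val x) (val y)).

Lemma meetL_glb (x y : LT) : is_glb le x y (meetL x y).
Proof.
have lM : leK (meetM (val x) (val y)) (meetK (val x) (val y)).
  rewrite /meetM; case: ifP => _; apply/leKP; split => //=.
  - by move=> i; rewrite ffunE; case: ifP => // /eqP->.
  - by rewrite implybb.
  - by rewrite implybb.
apply/and3P; split.
- apply: (leK_trans lM).
  apply/leKP; split => /=; last by apply/implyP => /andP[].
  by move=> i; rewrite ffunE /mino; case: ifP => //; lia.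
- apply: (leK_trans lM).
  apply/leKP; split => /=; last by apply/implyP => /andP[].
  by move=> i; rewrite ffunE /mino; case: ifP => //; lia.
apply/forallP => z; apply/implyP => /leKP[H1 b1]; apply/implyP => /leKP[H2 b2].
have zM : forall i, (val z).1 i <= (meetK (val x) (val y)).1 i.
  by move=> i; rewrite ffunE /mino; case: ifP => _; [exact: H1 | exact: H2].
apply/leKP; rewrite /= /meetM; case: ifP => inM /=; last first.
  by split => //; move: b1 b2; case: (val x).2; case: (val y).2; case: (val z).2.
move: (inM); rewrite in_efE => /and3P[nb pos /forallP Hi].
have zb : ~~ (val z).2.
  by move: nb b1 b2 => /=; case: (val x).2; case: (val y).2; case: (val z).2.
split; last by rewrite (negbTE zb).
move=> i; rewrite ffunE; case: ifP => [/eqP -> | _]; last exact: zM.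
have := valP z; rewrite in_efE zb /= => /negP Hz.
rewrite leqn0; apply/negPn/negP => zpos; apply: Hz; rewrite lt0n zpos /=.
apply/forallP => j; apply/implyP => jl; apply: leq_ltn_trans (zM j) _.
exact: implyP (Hi j) jl.
Qed.

Lemma lattice : is_lattice le.
Proof.
split; first exact: po.
move=> x y; split; [exists (joinL x y); exact: joinL_lub | exists (meetL x y); exact: meetL_glb].
Qed.


Lemma inT (f : FF) : ~~ in_ef (f, true).
Proof. by rewrite /in_ef andbF. Qed.

Definition mkL (x : KT) (h : ~~ in_ef x) : LT := exist (fun x => ~~ in_ef x) x h.

Definition mkT (f : FF) : LT := mkL (inT f).

Lemma up_in x i (v : 'I_n.+1) : ~~ in_ef x -> i != lst -> x.1 i <= v -> ~~ in_ef (upd x.1 i v, x.2).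
Proof.
move=> hx il xv; move: hx; rewrite !in_efE; apply: contra => /and3P[nb pos /forallP H].
rewrite nb /=; move: pos; rewrite ffunE eq_sym (negbTE il) => -> /=.
apply/forallP => j; apply/implyP => jl; have := implyP (H j) jl.
by rewrite ffunE; case: ifP => [/eqP -> | _] //; lia.
Qed.

Lemma down_in x (v : 'I_n.+1) : ~~ in_ef x -> v <= x.1 lst -> ~~ in_ef (upd x.1 lst v, x.2).
Proof.
move=> hx xv; move: hx; rewrite !in_efE; apply: contra => /and3P[nb pos /forallP H].
rewrite nb /=; move: pos; rewrite ffunE eqxx => pos; rewrite (leq_trans pos xv) /=.
apply/forallP => j; apply/implyP => jl; have := implyP (H j) jl.
by rewrite ffunE (negbTE jl).
Qed.

Lemma rk_pair (f : FF) (b : bool) : rk (f, b) = sk f + b.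
Proof. by []. Qed.

Lemma coversE (a b : LT) : covers le a b = le a b && (rk (val b) == (rk (val a)).+1).
Proof.
apply/idP/idP; last first.
  case/andP => ab /eqP rb; apply/and3P; split => //.
    by apply/negP => /eqP e; rewrite e in rb; lia.
  apply/forallP => z; apply/negP => /and4P[az zb za zb'].
  have h1 := rk_mono az; have h2 := rk_mono zb.
  case: (ltnP (rk (val a)) (rk (val z))) => h.
    have e : val z = val b by apply: rk_eq => //; lia.
    by move: zb'; rewrite -val_eqE e eqxx.
  have e : val a = val z by apply: rk_eq.
  by move: za; rewrite -val_eqE e eqxx.
case: a b => [xa ha] [xb hb]; rewrite /=.
case/and3P => ab neq /forallP H; rewrite ab andTb.
have key : forall z : LT, le (mkL ha) z -> le z (mkL hb) -> z != mkL ha ->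
    rk (val z) = (rk xa).+1 -> rk xb == (rk xa).+1.
  move=> z az zb za rz; have := H z; rewrite az zb za /= negbK => /eqP e.
  by subst; rewrite rz.
have key2 : forall z : LT, le (mkL ha) z -> le z (mkL hb) -> z != mkL hb ->
    (rk (val z)).+1 = rk xb -> rk xb == (rk xa).+1.
  move=> z az zb zb' rz; have := H z; rewrite az zb zb' /= andbT negbK => /eqP e.
  by subst; rewrite -rz.
case/leKP: (ab) => /= Hab bab.
case: (boolP (xa.2 == xb.2)) => [/eqP Eab | nE].
-
  case: (boolP [exists i, (i != lst) && (xa.1 i < xb.1 i)]).
    case/existsP => i /andP[il lti].
    have ib := ltn_ord (xb.1 i).
    have hin : ~~ in_ef (upd xa.1 i (inord (xa.1 i).+1), xa.2).
      by apply: up_in => //; rewrite inordK //; lia.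
    apply: (key (mkL hin)); rewrite /mkL /=.
    + apply/leKP; split; last by rewrite /= implybb.
      by move=> j; rewrite /= ffunE; case: ifP => [/eqP -> | _] //; rewrite inordK //; lia.
    + apply/leKP; split; last by rewrite /= Eab implybb.
      by move=> j; rewrite /= ffunE; case: ifP => [/eqP -> | _] //; rewrite inordK //; lia.
    + rewrite -val_eqE /=; apply/negP => /eqP e; move: (congr1 (fun p : KT => nat_of_ord (p.1 i)) e).
      rewrite /= ffunE eqxx inordK; lia.
    + have := rk_upd xa.1 i (inord (xa.1 i).+1) xa.2.
      rewrite inordK; last by lia.
      by rewrite -surjective_pairing; lia.
  move/existsPn => Hn.
  have eqo : forall j, j != lst -> xa.1 j = xb.1 j :> nat.
    by move=> j jl; have := Hn j; rewrite jl /= => h; have := Hab j; lia.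
  have ltl : xa.1 lst < xb.1 lst.
    rewrite ltnNge; apply/negP => hl; move: neq; rewrite -val_eqE /=.
    rewrite [xa]surjective_pairing [xb]surjective_pairing Eab.
    have -> : xa.1 = xb.1.
      apply/ffunP => j; apply/val_inj; case: (eqVneq j lst) => [-> | jl]; last exact: eqo.
      by apply/eqP; rewrite eqn_leq hl Hab.
    by rewrite eqxx.
  have lb := ltn_ord (xb.1 lst).
  have hin : ~~ in_ef (upd xb.1 lst (inord (xb.1 lst).-1), xb.2).
    by apply: down_in => //; rewrite inordK; lia.
  apply: (key2 (mkL hin)); rewrite /mkL /=.
  + apply/leKP; split; last by rewrite /= Eab implybb.
    move=> j; rewrite /= ffunE; case: ifP => [/eqP -> | jl]; first by rewrite inordK; lia.
    by apply: Hab.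
  + apply/leKP; split; last by rewrite /= implybb.
    by move=> j; rewrite /= ffunE; case: ifP => [/eqP -> | _] //; rewrite inordK; lia.
  + rewrite -val_eqE /=; apply/negP => /eqP e; move: (congr1 (fun p : KT => nat_of_ord (p.1 lst)) e).
    rewrite /= ffunE eqxx inordK; lia.
  + have := rk_upd xb.1 lst (inord (xb.1 lst).-1) xb.2.
    rewrite inordK; last by lia.
    by rewrite -surjective_pairing; lia.
-
  have [Ea Eb] : xa.2 = false /\ xb.2 = true.
    by move: nE bab; case: xa.2; case: xb.2.
  apply: (key (mkT xa.1)); rewrite /mkT /mkL /=.
  + by apply/leKP; split => //=; rewrite Ea.
  + by apply/leKP; split => //=; rewrite Eb.
  + by rewrite -val_eqE /= [xa]surjective_pairing Ea; apply/negP => /eqP [].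
  + by rewrite /rk /= Ea addn0 addn1.
Qed.


Lemma usm : upper_semimodular le.
Proof.
move=> x y m j gm lj cmx.
have ej : j = joinL x y := lub_unique po lj (joinL_lub x y).
case/and3P: (gm) => mx my /forallP gH.
set M := meetK (val x) (val y).
have meetle : leK (val m) M.
  case/leKP: mx => H1 b1; case/leKP: my => H2 b2; apply/leKP; split.
    by move=> i; rewrite ffunE /mino; case: ifP => _; [exact: H1 | exact: H2].
  by move: b1 b2; rewrite /M /=; case: (val m).2 => //= -> ->.
have Mx : leK M (val x).
  apply/leKP; split; last by apply/implyP => /andP[].
  by move=> i; rewrite ffunE /mino; case: ifP => //; lia.
have My : leK M (val y).
  apply/leKP; split; last by apply/implyP => /andP[].
  by move=> i; rewrite ffunE /mino; case: ifP => //; lia.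
move: cmx; rewrite coversE => /andP[_ /eqP rx].
have eM : val m = M.
  have h1 := rk_mono meetle; have h2 := rk_mono Mx.
  apply: (rk_eq meetle).
  case: (ltnP (rk M) (rk (val x))) => h; first by move: h; rewrite rx ltnS.
  have eMx : M = val x := rk_eq Mx h.
  have xy : le x y by rewrite /leL -eMx.
  have [refl _ _] := po.
  have xm : le x m := implyP (implyP (gH x) (refl x)) xy.
  by have := rk_mono xm; rewrite rx ltnn.
rewrite coversE ej; apply/andP; split; first by case/and3P: (joinL_lub x y).
apply/eqP; change (rk (joinK (val x) (val y)) = (rk (val y)).+1).
have E := rk_mod (val x) (val y); rewrite -/M -eM rx in E.
by apply/eqP; rewrite -(eqn_add2r (rk (val m))) E addSn -addnS addnC.
Qed.


Lemma card_pred_pos : #|[pred v : 'I_n.+1 | 0 < v]| = n.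
Proof.
have := cardC [pred v : 'I_n.+1 | 0 < v]; rewrite card_ord.
have c1 : #|[predC [pred v : 'I_n.+1 | 0 < v]]| = 1.
  apply: etrans (card1 (@ord0 n)); apply: eq_card => v; rewrite !inE -val_eqE /=.
  by case: (nat_of_ord v).
by rewrite c1 addn1 => -[].
Qed.

Lemma card_pred_ltn : #|[pred v : 'I_n.+1 | v < n]| = n.
Proof.
have := cardC [pred v : 'I_n.+1 | v < n]; rewrite card_ord.
have c1 : #|[predC [pred v : 'I_n.+1 | v < n]]| = 1.
  apply: etrans (card1 (@ord_max n)); apply: eq_card => v; rewrite !inE -val_eqE /=.
  by have := ltn_ord v; lia.
by rewrite c1 addn1 => -[].
Qed.

Definition Fam (i : 'I_k.+1) : pred 'I_n.+1 :=
  [pred v : 'I_n.+1 | if i == lst then 0 < v else v < n].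

Lemma foldr_const (T : Type) (s : seq T) c : foldr muln 1 (map (fun _ => c) s) = c ^ size s.
Proof. by elim: s => //= a s ->; rewrite expnS. Qed.

Lemma card_box : #|[pred x : KT | in_ef x]| = n ^ k.+1.
Proof.
rewrite (@eq_card _ _ [set (f, false) | f in family Fam]); last first.
  move=> [f b]; rewrite !inE in_efE /=; apply/idP/idP.
    case/and3P => nb pos /forallP H; apply/imsetP; exists f; last by rewrite (negbTE nb).
    apply/familyP => i; rewrite /Fam inE; case: ifP => [/eqP -> // | il].
    by apply: (implyP (H i)); rewrite il.
  case/imsetP => g /familyP H [-> ->] /=; apply/andP; split.
    by have := H lst; rewrite /Fam inE eqxx.
  apply/forallP => i; apply/implyP => il; have := H i; rewrite /Fam inE (negbTE il).
  done.
rewrite card_imset; last by move=> f g [].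
rewrite card_family.
rewrite /image_mem (eq_map (g := fun _ => n)); first by rewrite foldr_const size_map -enumT size_enum_ord.
move=> i /=; case: (eqVneq i lst) => [-> | il].
  by apply: etrans card_pred_pos; apply: eq_card => v; rewrite !inE eqxx.
by apply: etrans card_pred_ltn; apply: eq_card => v; rewrite !inE (negbTE il).
Qed.

Lemma card_L : #|{: LT}| = 2 * n.+1 ^ k.+1 - n ^ k.+1.
Proof.
rewrite card_sig.
have := cardC [pred x : KT | in_ef x]; rewrite card_box card_prod card_ffun !card_ord card_bool.
rewrite (@eq_card _ _ [predC [pred x : KT | in_ef x]]); first by lia.
by move=> x; rewrite !inE.
Qed.


Lemma ub_equiv (S S' : {set LT}) : S' \subset S ->
  (forall z : LT, [forall y in S', le y z] -> [forall y in S, le y z]) ->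
  forall j, is_lub_set le S j = is_lub_set le S' j.
Proof.
move=> sub H.
have E : forall z : LT, [forall y in S, le y z] = [forall y in S', le y z].
  move=> z; apply/idP/idP; last exact: H.
  move/forallP => Hz; apply/forallP => y; apply/implyP => yS'.
  exact: implyP (Hz y) (subsetP sub y yS').
move=> j; rewrite /is_lub_set E; congr (_ && _); apply: eq_forallb => z.
by rewrite E.
Qed.

Lemma wit_fun (S : {set LT}) : S != set0 ->
  exists g : 'I_k.+1 -> LT, [/\ forall j, g j \in S,
     forall i, exists j, forall s, s \in S -> (val s).1 i <= (val (g j)).1 i &
     (exists2 s, s \in S & (val s).2) -> exists j, (val (g j)).2].
Proof.
case/set0Pn => s0 s0S.
pose m i := [arg max_(s > s0 in S) nat_of_ord ((val s).1 i)].
have mS i : m i \in S.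
  by rewrite /m; case: (arg_maxnP (fun s : LT => nat_of_ord ((val s).1 i)) s0S).
have mM i s : s \in S -> (val s).1 i <= (val (m i)).1 i.
  by rewrite /m; case: (arg_maxnP (fun s : LT => nat_of_ord ((val s).1 i)) s0S) => w _ H /H.
case: (boolP [exists s in S, (val s).2]) => [/existsP[t /andP[tS tb]] | /existsPn nob]; last first.
  exists m; split => //; first by move=> i; exists i; exact: mM.
  by move=> [s sS sb]; have := nob s; rewrite sS sb.
case: (boolP (val (m lst)).2) => mb.
  by exists m; split=> //; [move=> i; exists i; exact: mM | exists lst].
case: (boolP ((val (m lst)).1 lst <= (val t).1 lst)) => tl.
  exists (fun j => if j == lst then t else m j); split.
  - by move=> j; case: ifP.
  - move=> i; exists i; case: ifP => [/eqP -> | _] s sS; last exact: mM.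
    exact: leq_trans (mM lst s sS) tl.
  - by exists lst; rewrite eqxx.
have := valP (m lst); rewrite in_efE (negbTE mb) /=.
have -> : 0 < (val (m lst)).1 lst by lia.
rewrite /= => /forallPn [i0]; rewrite negb_imply => /andP[i0l wi0].
exists (fun j => if j == lst then t else if j == i0 then m lst else m j); split.
- by move=> j; case: ifP => _ //; case: ifP.
- move=> i; case: (eqVneq i lst) => [-> | il].
    by exists i0; rewrite (negbTE i0l) eqxx => s sS; exact: mM.
  case: (eqVneq i i0) => [-> | ii0].
    exists i0; rewrite (negbTE i0l) eqxx => s sS.
    by apply: (@leq_trans n); [rewrite -ltnS ltn_ord | rewrite leqNgt].
  by exists i; rewrite (negbTE il) (negbTE ii0) => s sS; exact: mM.
- by exists lst; rewrite eqxx.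
Qed.

Lemma breadth_k : breadth_prop le k.+1.
Proof.
move=> S cS.
have S0 : S != set0 by rewrite -card_gt0; lia.
case: (wit_fun S0) => g [gS H1 H2].
pose W := g @: [set: 'I_k.+1].
have WS : W \subset S by apply/subsetP => w /imsetP[j _ ->]; exact: gS.
have Wc : #|W| <= k.+1.
  by apply: leq_trans (leq_imset_card _ _) _; rewrite cardsT card_ord.
case: (ext_set WS Wc cS) => S' WS' [S'S cS'].
exists S' => //; split => //.
apply: ub_equiv => // z /forallP ubz.
apply/forallP => s; apply/implyP => sS.
have gz j : le (g j) z.
  by apply: (implyP (ubz (g j))); apply: (subsetP WS'); apply: imset_f; rewrite inE.
apply/leKP; split.
- move=> i; case: (H1 i) => j Hj; apply: leq_trans (Hj s sS) _.
  by case/leKP: (gz j) => + _; apply.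
- apply/implyP => sb; case: H2 => [|j gj]; first by exists s.
  by case/leKP: (gz j) => _ /implyP; apply.
Qed.


Definition z0 : FF := [ffun => ord0].
Lemma z0_in : ~~ in_ef (z0, false).
Proof. by rewrite in_efE ffunE. Qed.
Definition botL : LT := mkL z0_in.
Lemma bot_le (x : LT) : le botL x.
Proof. by apply/leKP; split => //= i; rewrite ffunE. Qed.

Definition atomK (i : 'I_k.+1) : KT :=
  if i == lst then (z0, true) else (upd z0 i (inord 1), false).
Lemma atom_in i : ~~ in_ef (atomK i).
Proof.
rewrite /atomK; case: ifP => il; first exact: inT.
by rewrite in_efE /= !ffunE eq_sym il.
Qed.
Definition atom i : LT := mkL (atom_in i).

Lemma atom_inj : injective atom.
Proof.
move=> i j e; move: (congr1 val e); rewrite /atom /mkL /= /atomK.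
case: (eqVneq i lst) => [-> | il]; case: (eqVneq j lst) => [-> | jl] //=; try by case.
move/(congr1 (fun p : KT => nat_of_ord (p.1 i))); rewrite /= !ffunE eqxx inordK; last by lia.
by case: (eqVneq i j).
Qed.

Definition zK (u : 'I_k.+1) : KT :=
  if u == lst then ([ffun => ord_max], false)
  else ([ffun j => if j == u then ord0 else ord_max], true).

Lemma zK_in u : ~~ in_ef (zK u).
Proof.
rewrite /zK; case: ifP => ul; last exact: inT.
rewrite in_efE /=; apply/negP => /andP[_ /forallP H].
have := H (inord 0); rewrite ffunE -val_eqE /= inordK; last by lia.
by case: k hk => // k' _ /=; rewrite ltnn.
Qed.

Lemma atom_le_z i u : i != u -> le (atom i) (mkL (zK_in u)).
Proof.
move=> iu; apply/leKP; rewrite /atom /mkL /= /atomK /zK.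
case: (eqVneq i lst) => [il | il]; case: (eqVneq u lst) => [ul | ul] /=.
- by move: iu; rewrite il ul eqxx.
- by split => // j; rewrite !ffunE.
- split => // j; rewrite !ffunE; case: ifP => _ //.
  by rewrite inordK //=; lia.
- split => // j; rewrite !ffunE; case: (eqVneq j i) => [-> | ji].
    by rewrite (negbTE iu) inordK //=; lia.
  by case: ifP.
Qed.

Lemma atom_nle_z u : ~~ le (atom u) (mkL (zK_in u)).
Proof.
apply/negP => /leKP; rewrite /atom /mkL /= /atomK /zK.
case: (eqVneq u lst) => [ul | ul] /= [H b] //.
by have := H u; rewrite !ffunE !eqxx inordK //; lia.
Qed.

Lemma not_breadth b : 0 < b < k.+1 -> ~ breadth_prop le b.
Proof.
case/andP => b0 bk H.
have bk' : b.+1 <= k.+1 by [].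
pose S := (fun i => atom (widen_ord bk' i)) @: [set: 'I_b.+1].
have cS : #|S| = b.+1.
  rewrite card_imset ?cardsT ?card_ord //.
  by move=> i j /atom_inj /(congr1 val) /= e; exact: val_inj.
case: (H S) => [|S' S'S [cS' E]]; first by rewrite cS.
have : ~~ (S \subset S').
  by apply/negP => /subset_leq_card; rewrite cS cS'; lia.
case/subsetPn => u uS uS'.
case/imsetP: (uS) => i _ eu.
have [j lj] := lub_set_ex po (fun x y : LT => ex_intro (fun j => is_lub le x y j) _ (joinL_lub x y)) bot_le S'.
have lj' := lj; rewrite -E in lj'.
have uj : le u j.
  by case/andP: lj' => /forallP H1 _; apply: (implyP (H1 u)).
have jz : le j (mkL (zK_in (widen_ord bk' i))).
  case/andP: lj => _ /forallP H2; apply: (implyP (H2 _)); apply/forallP => w.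
  apply/implyP => wS'.
  have := subsetP S'S w wS'; case/imsetP => i' _ ew.
  rewrite ew; apply: atom_le_z.
  apply/negP => /eqP e'; move: uS'; rewrite eu -e' -ew wS'.
  done.
have [_ _ tr] := po.
have := tr _ _ _ uj jz; rewrite eu; apply/negP; exact: atom_nle_z.
Qed.

Lemma breadth : has_breadth le k.+1.
Proof. split => //; [exact: breadth_k | exact: not_breadth]. Qed.


Definition dn (a b : nat) := (a - b) + (b - a).
Definition Dl x y : nat := \sum_i dn (x.1 i) (y.1 i) + (x.2 != y.2).

Lemma Dl0 x : Dl x x = 0.
Proof. by rewrite /Dl eqxx addn0 big1 // => i _; rewrite /dn subnn. Qed.

Lemma Dl_sym x y : Dl x y = Dl y x.
Proof.
rewrite /Dl eq_sym; congr (_ + _); apply: eq_bigr => i _; rewrite /dn; lia.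
Qed.

Lemma Dl_tri x y z : Dl x z <= Dl x y + Dl y z.
Proof.
rewrite /Dl addnACA -big_split leq_add //=.
  by apply: leq_sum => i _; rewrite /dn; lia.
by case: x.2; case: y.2; case: z.2.
Qed.

Lemma Dl_le x y : leK x y -> Dl x y + rk x = rk y.
Proof.
case/leKP => H b; rewrite /Dl /rk.
have E : \sum_i dn (x.1 i) (y.1 i) + sk x.1 = sk y.1.
  rewrite /sk -big_split /=; apply: eq_bigr => i _; have := H i; rewrite /dn; lia.
by move: E b; case: x.2; case: y.2 => //= E _; lia.
Qed.

Lemma Dl_bound x y : Dl x y <= k.+1 * n + 1.
Proof.
rewrite /Dl leq_add //; last by case: (_ != _).
apply: leq_trans (_ : \sum_(i < k.+1) n <= _); last by rewrite sum_nat_const card_ord.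
apply: leq_sum => i _; have := ltn_ord (x.1 i); have := ltn_ord (y.1 i); rewrite /dn; lia.
Qed.

Lemma Dl_adj (a b : LT) : adj le a b -> Dl (val a) (val b) <= 1.
Proof.
have h : forall a b : LT, covers le a b -> Dl (val a) (val b) <= 1.
  move=> a' b'; rewrite coversE => /andP[ab /eqP r].
  by have := Dl_le ab; rewrite r; lia.
by case/orP => [/h // | /h]; rewrite Dl_sym.
Qed.

Lemma bern m : m * n + 1 <= n.+1 ^ m.
Proof.
elim: m => [|m IH] //; rewrite expnS.
apply: leq_trans (_ : n.+1 * (m * n + 1) <= _); last by rewrite leq_mul2l.
nia.
Qed.

Lemma cardL_big : n.+1 ^ k.+1 <= #|{: LT}|.
Proof.
rewrite card_L; have : n ^ k.+1 <= n.+1 ^ k.+1 by rewrite leq_exp2r.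
lia.
Qed.

Lemma dist_lb (z x : LT) : Dl (val z) (val x) <= dist le z x.
Proof.
apply: dist_ge.
  move=> m; apply: (walk_lb (D := fun a b : LT => Dl (val a) (val b))).
  - by move=> a; exact: Dl0.
  - by move=> a b c; exact: Dl_tri.
  - exact: Dl_adj.
apply: leq_trans (Dl_bound _ _) _; apply: leq_trans (bern _) cardL_big.
Qed.


Lemma cov_step (f : FF) i a : a < n ->
  covers le (mkT (upd f i (inord a))) (mkT (upd f i (inord a.+1))).
Proof.
move=> an; rewrite coversE; apply/andP; split.
  apply/leKP; split => //= j; rewrite !ffunE; case: ifP => // _.
  by rewrite !inordK //; lia.
have e1 := rk_upd f i (inord a) true; have e2 := rk_upd f i (inord a.+1) true.
rewrite !inordK in e1 e2; try lia.
by apply/eqP; rewrite /mkT /mkL /=; lia.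
Qed.

Lemma line_up (f : FF) i a m : a + m <= n ->
  walk_len le m (mkT (upd f i (inord a))) (mkT (upd f i (inord (a + m)))).
Proof.
elim: m => [|m IH] h; first by rewrite addn0; exact: walk0.
suff : walk_len le (m + 1) (mkT (upd f i (inord a))) (mkT (upd f i (inord (a + m).+1))).
  by rewrite addn1 addnS.
apply: walk_cat (IH _) (walk1 _); first by lia.
by rewrite /adj cov_step //; lia.
Qed.

Lemma line_down (f : FF) i a m : a + m <= n ->
  walk_len le m (mkT (upd f i (inord (a + m)))) (mkT (upd f i (inord a))).
Proof.
elim: m => [|m IH] h; first by rewrite addn0; exact: walk0.
suff : walk_len le (1 + m) (mkT (upd f i (inord (a + m).+1))) (mkT (upd f i (inord a))).
  by rewrite add1n addnS.
apply: walk_cat (walk1 _) (IH _); last by lia.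
by rewrite /adj cov_step ?orbT //; lia.
Qed.

Lemma cov_bool (f : FF) (h : ~~ in_ef (f, false)) : covers le (mkL h) (mkT f).
Proof.
rewrite coversE; apply/andP; split; first by apply/leKP; split.
by rewrite /mkT /mkL /= /rk /= addn0 addn1.
Qed.

Definition i0 : 'I_k.+1 := inord 0.
Definition i1 : 'I_k.+1 := inord 1.
Lemma i0l : i0 != lst. Proof. by rewrite -val_eqE /= inordK //; lia. Qed.
Lemma i1l : i1 != lst. Proof. by rewrite -val_eqE /= inordK //; lia. Qed.
Lemma i01 : i0 != i1. Proof. by rewrite -val_eqE /= !inordK //; lia. Qed.

Definition Yf : FF := upd z0 lst ord_max.
Definition Af : FF := upd Yf i0 ord_max.
Definition Bf : FF := upd Yf i1 ord_max.

Lemma A_in : ~~ in_ef (Af, false).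
Proof.
rewrite in_efE /=; apply/negP => /andP[_ /forallP H]; have := implyP (H i0) i0l.
by rewrite /Af ffunE eqxx ltnn.
Qed.
Lemma B_in : ~~ in_ef (Bf, false).
Proof.
rewrite in_efE /=; apply/negP => /andP[_ /forallP H]; have := implyP (H i1) i1l.
by rewrite /Bf ffunE eqxx ltnn.
Qed.

Definition pA : LT := mkL A_in.
Definition pB : LT := mkL B_in.
Definition pF : LT := botL.
Definition pY : LT := mkT Yf.

Lemma ord0E : inord 0 = (@ord0 n).
Proof. by apply: val_inj; rewrite /= inordK. Qed.
Lemma ordmaxE : inord n = (@ord_max n).
Proof. by apply: val_inj; rewrite /= inordK. Qed.

Lemma walk_YA : walk_len le n.+1 pY pA.
Proof.
suff : walk_len le (n + 1) pY pA by rewrite addn1.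
apply: (@walk_cat _ _ n 1 pY (mkT Af)).
  2: by apply: walk1; rewrite /adj /pA /botL (cov_bool A_in) orbT.
have E1 : Yf = upd Yf i0 (inord 0).
  apply/ffunP => j; rewrite [RHS]ffunE; case: (eqVneq j i0) => [-> | //].
  by rewrite ord0E /Yf ffunE (negbTE i0l) ffunE.
have := @line_up Yf i0 0 n (leqnn _); rewrite add0n -E1 ordmaxE.
done.
Qed.

Lemma walk_YB : walk_len le n.+1 pY pB.
Proof.
suff : walk_len le (n + 1) pY pB by rewrite addn1.
apply: (@walk_cat _ _ n 1 pY (mkT Bf)).
  2: by apply: walk1; rewrite /adj /pB /botL (cov_bool B_in) orbT.
have E1 : Yf = upd Yf i1 (inord 0).
  apply/ffunP => j; rewrite [RHS]ffunE; case: (eqVneq j i1) => [-> | //].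
  by rewrite ord0E /Yf ffunE (negbTE i1l) ffunE.
have := @line_up Yf i1 0 n (leqnn _); rewrite add0n -E1 ordmaxE.
done.
Qed.

Lemma walk_YF : walk_len le n.+1 pY pF.
Proof.
suff : walk_len le (n + 1) pY pF by rewrite addn1.
apply: (@walk_cat _ _ n 1 pY (mkT z0)).
  2: by apply: walk1; rewrite /adj /pF /botL (cov_bool z0_in) orbT.
have E1 : z0 = upd z0 lst (inord 0).
  apply/ffunP => j; rewrite [RHS]ffunE; case: (eqVneq j lst) => [-> | //].
  by rewrite ord0E ffunE.
have := @line_down z0 lst 0 n (leqnn _); rewrite add0n -E1 ordmaxE.
done.
Qed.


Lemma sum3 (f : 'I_k.+1 -> nat) a b c : a != b -> a != c -> b != c ->
  f a + f b + f c <= \sum_i f i.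
Proof.
move=> ab ac bc.
rewrite (bigD1 a) // (bigD1 b) /=; last by rewrite eq_sym.
rewrite (bigD1 c) /=; last by rewrite eq_sym ac eq_sym bc.
rewrite !addnA leq_addr //.
Qed.

Lemma sum4 (f : 'I_k.+1 -> nat) a b c d : a != b -> a != c -> b != c ->
  d != a -> d != b -> d != c ->
  f a + f b + f c + f d <= \sum_i f i.
Proof.
move=> ab ac bc da db dc.
rewrite (bigD1 a) // (bigD1 b) /=; last by rewrite eq_sym.
rewrite (bigD1 c) /=; last by rewrite eq_sym ac eq_sym bc.
rewrite (bigD1 d) /=; last by rewrite da db dc.
rewrite !addnA leq_addr //.
Qed.

Lemma AfE j : nat_of_ord (Af j) = if (j == i0) || (j == lst) then n else 0.
Proof. by rewrite /Af /Yf !ffunE; case: (j == i0) => //=; case: (j == lst). Qed.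
Lemma BfE j : nat_of_ord (Bf j) = if (j == i1) || (j == lst) then n else 0.
Proof. by rewrite /Bf /Yf !ffunE; case: (j == i1) => //=; case: (j == lst). Qed.
Lemma z0E j : nat_of_ord (z0 j) = 0.
Proof. by rewrite ffunE. Qed.

Lemma lb3 (z : LT) :
  3 * n.+1 <= Dl (val z) (Af, false) + Dl (val z) (Bf, false) + Dl (val z) (z0, false).
Proof.
case: z => [[zf b] hz] /=.
rewrite /Dl /=.
set SA := \sum_i dn (zf i) (Af i).
set SB := \sum_i dn (zf i) (Bf i).
set SF := \sum_i dn (zf i) (z0 i).
have e1 : (i1 == i0) = false by rewrite eq_sym (negbTE i01).
have e2 : (lst == i0) = false by rewrite eq_sym (negbTE i0l).
have e3 : (lst == i1) = false by rewrite eq_sym (negbTE i1l).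
have ha0 := ltn_ord (zf i0); have ha1 := ltn_ord (zf i1); have hal := ltn_ord (zf lst).
case: (boolP [|| b, zf lst == 0 :> nat, zf i0 == n :> nat | zf i1 == n :> nat]) => C.
  have hA := sum3 (fun i => dn (zf i) (Af i)) i01 i0l i1l.
  have hB := sum3 (fun i => dn (zf i) (Bf i)) i01 i0l i1l.
  have hF := sum3 (fun i => dn (zf i) (z0 i)) i01 i0l i1l.
  rewrite /= !AfE !BfE !z0E !eqxx e1 e2 e3 (negbTE i0l) (negbTE i1l) (negbTE i01) /= in hA hB hF.
  rewrite -/SA -/SB -/SF in hA hB hF.
  clear hz; move: C; case: b => /=; rewrite /dn in hA hB hF; lia.
move: C; rewrite !negb_or => /and4P[nb c0 a0 b0].
rewrite (negbTE nb) in hz *.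
move: hz; rewrite in_efE /= lt0n c0 /= => /forallPn [i]; rewrite negb_imply => /andP[il zi].
have ii0 : i != i0 by apply: contraNneq a0 => <-; have := ltn_ord (zf i); lia.
have ii1 : i != i1 by apply: contraNneq b0 => <-; have := ltn_ord (zf i); lia.
have hA := sum4 (fun i => dn (zf i) (Af i)) i01 i0l i1l ii0 ii1 il.
have hB := sum4 (fun i => dn (zf i) (Bf i)) i01 i0l i1l ii0 ii1 il.
have hF := sum4 (fun i => dn (zf i) (z0 i)) i01 i0l i1l ii0 ii1 il.
rewrite /= !AfE !BfE !z0E !eqxx e1 e2 e3 (negbTE i0l) (negbTE i1l) (negbTE i01) /= in hA hB hF.
rewrite (negbTE ii0) (negbTE ii1) (negbTE il) /= in hA hB hF.
rewrite -/SA -/SB -/SF in hA hB hF.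
rewrite /dn in hA hB hF; lia.
Qed.


Lemma median_Y : is_median le [:: pA; pB; pF] pY.
Proof.
move=> z; rewrite !total_dist3.
have cardb : n.+1 < #|{: LT}|.
  apply: leq_trans (leq_trans (bern k.+1) cardL_big).
  have : 0 < k * n by rewrite muln_gt0; apply/andP; split; lia.
  rewrite mulSn; lia.
have dA := dist_le walk_YA cardb.
have dB := dist_le walk_YB cardb.
have dF := dist_le walk_YF cardb.
have L3 : 3 * n.+1 <= dist le z pA + dist le z pB + dist le z pF.
  apply: leq_trans (lb3 z) _.
  by rewrite !leq_add //; apply: dist_lb.
lia.
Qed.

Lemma topE i : ([ffun => @ord_max n] : FF) i = @ord_max n.
Proof. by rewrite ffunE. Qed.

Lemma not_c1 : ~ c1_median le.
Proof.
move=> H.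
have [j lj] := lub_set_ex po (fun x y : LT => ex_intro (fun j => is_lub le x y j) _ (joinL_lub x y))
  bot_le [set x in [:: pA; pB; pF]].
have yj := H [:: pA; pB; pF] pY isT median_Y j lj.
have jt : le j (mkL (zK_in lst)).
  case/andP: lj => _ /forallP H2; apply: (implyP (H2 _)); apply/forallP => w; apply/implyP.
  rewrite inE !in_cons in_nil orbF => /or3P[] /eqP ->; apply/leKP;
    rewrite /mkL /= /zK eqxx; split => //= i; rewrite topE; exact: leq_ord.
have [_ _ tr] := po.
have := tr _ _ _ yj jt; case/leKP => _; rewrite /mkL /= /zK eqxx.
done.
Qed.

End LN.

Theorem lemma2p3 (n k : nat) : 4 <= n -> 3 <= k ->
  [/\ is_lattice (@leL n k),
      upper_semimodular (@leL n k),
      #|{: L n k}| = 2 * n ^ k - (n - 1) ^ k,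
      has_breadth (@leL n k) k &
      ~ c1_median (@leL n k)].
Proof.
case: n => [|n] // hn; case: k => [|k] // hk.
have hn' : 2 < n by [].
have hk' : 1 < k by [].
split.
- by apply: lattice.
- by apply: usm.
- by rewrite card_L // subn1.
- by apply: breadth.
- by apply: not_c1.
Qed.
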